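(* Let $f=\min_{1\le j\le m}\{a_j+\sum_{i=1}^n t_{j,i}X_i\}$ be a tropical polynomial in $n$ variables, and for $N\ge 1$ let $U_N\subset\mathbb{R}^{N^n}$ be the set of points satisfying all linearizations of $f$ on the grid $T_N$. Then for every partition of the grid $T_N$ into subgrids that are cubes with sides $q_1,\dots,q_R$ one has $\dim(U_N)\le \dim(U_{q_1})+\dots+\dim(U_{q_R})$. Consequently the limit $$H(f):=\lim_{N\to\infty}\frac{\dim(U_N)}{N^n}$$ exists and equals $\inf_{N\ge 1}\dim(U_N)/N^n$.
   Context: A tropical polynomial in $n$ variables is an expression $f=\min_{1\le j\le m}\{a_j+\sum_{i=1}^n t_{j,i}X_i\}$ with $a_j\in\mathbb{R}$ and pairwise distinct exponent vectors $(t_{j,1},\dots,t_{j,n})\in\mathbb{Z}^n$. For an integer $N\ge1$ let $T_N=\{0,\dots,N-1\}^n\subset\mathbb{Z}^n$, and consider variables $u(k_1,\dots,k_n)$, $(k_1,\dots,k_n)\in T_N$, so that points $u$ lie in $\mathbb{R}^{T_N}\cong\mathbb{R}^{N^n}$. For each shift $(s_1,\dots,s_n)\in\mathbb{Z}^n$ such that $(t_{j,1}+s_1,\dots,t_{j,n}+s_n)\in T_N$ for all $1\le j\le m$, the linearization of $f$ with this shift is the tropical linear form $\min_{1\le j\le m}\{a_j+u(t_{j,1}+s_1,\dots,t_{j,n}+s_n)\}$; a point $u$ satisfies it if this minimum is attained at least twice. $U_N$ is the set of all $u\in\mathbb{R}^{N^n}$ satisfying all such linearizations; it is a finite union of convex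 polyhedra and $\dim$ denotes its dimension (maximal dimension of a polyhedron in it). A subgrid with side $q$ is a translate $v+T_q\subset T_N$, identified with $T_q$ via the translation. *)

(* Defs.v *)
From HB Require Import structures.
From mathcomp Require Import all_boot all_order all_algebra.
From mathcomp Require Import all_classical all_reals all_analysis.
Set Implicit Arguments. Unset Strict Implicit. Unset Printing Implicit Defensive.
Import Order.TTheory GRing.Theory Num.Theory.
Local Open Scope classical_set_scope.
Local Open Scope ring_scope.

Section Trop.
Variable R : realType.

Definition polyhedron (T : finType) (P : set (T -> R)) : Prop :=
  exists (r : nat) (A : 'I_r -> T -> R) (b : 'I_r -> R),
    P = [set x | forall i : 'I_r, \sum_(t : T) A i t * x t <= b i].

Definition aff_indep (T : finType) (k : nat) (p : 'I_k.+1 -> T -> R) : Prop :=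
  forall c : 'I_k.+1 -> R,
    \sum_(i < k.+1) c i = 0 ->
    (forall t : T, \sum_(i < k.+1) c i * p i t = 0) ->
    forall i, c i = 0.

(* a convex set has dimension >= k iff it contains k+1 affinely independent
   points (dimension of its affine hull) *)
Definition dim_ge (T : finType) (P : set (T -> R)) (k : nat) : Prop :=
  exists p : 'I_k.+1 -> T -> R, (forall i, P (p i)) /\ aff_indep p.

(* dim S = maximal dimension of a convex polyhedron contained in S
   (convention: dim of the empty set is 0) *)
Definition dimS (T : finType) (S : set (T -> R)) : nat :=
  \max_(k < #|T|.+1 |
        `[< exists P : set (T -> R), polyhedron P /\ P `<=` S /\ dim_ge P k >]) k.

Definition grid (n N : nat) := {ffun 'I_n -> 'I_N}.

(* value of u : R^{T_N} at the integer point v (0 outside the grid; only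
   used at points of the grid) *)
Definition at_pt (n N : nat) (u : grid n N -> R) (v : 'I_n -> int) : R :=
  if [pick x : grid n N | [forall i, ((x i : nat)%:Z == v i)]] is Some x
  then u x else 0.

Definition admissible_shift (n m N : nat) (t : 'I_m -> 'I_n -> int)
    (s : 'I_n -> int) : Prop :=
  forall (j : 'I_m) (i : 'I_n), (0 <= t j i + s i) /\ (t j i + s i < N%:Z).

(* u satisfies the linearization of f = min_j {a_j + <t_j, X>} with shift s:
   the minimum of a_j + u(t_j + s) is attained at least twice *)
Definition satisfies_lin (n m N : nat) (a : 'I_m -> R) (t : 'I_m -> 'I_n -> int)
    (s : 'I_n -> int) (u : grid n N -> R) : Prop :=
  let val j := a j + at_pt u (fun i => t j i + s i) in
  exists j1 j2 : 'I_m, j1 != j2 /\ val j1 = val j2 /\ (forall j, val j1 <= val j).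

Definition U_set (n m : nat) (a : 'I_m -> R) (t : 'I_m -> 'I_n -> int) (N : nat)
    : set (grid n N -> R) :=
  [set u | forall s, @admissible_shift n m N t s -> satisfies_lin a t s u].

Definition dimU (n m : nat) (a : 'I_m -> R) (t : 'I_m -> 'I_n -> int) (N : nat)
    : nat := dimS (@U_set n m a t N).

End Trop.

(* Main.v *)
Require Import Defs.
From HB Require Import structures.
From mathcomp Require Import all_boot all_order all_algebra zify.
From mathcomp Require Import all_classical all_reals all_analysis.
Import Order.TTheory GRing.Theory Num.Theory.
Local Open Scope classical_set_scope.
Local Open Scope ring_scope.
Set Implicit Arguments. Unset Strict Implicit. Unset Printing Implicit Defensive.
Section LinAlg.
Variables (K : fieldType) (vT : vectType K).

Fixpoint gr (X : seq vT) : seq vT :=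
  if X is x :: X' then (if x \in <<gr X'>>%VS then gr X' else x :: gr X') else [::].

Lemma gr_sub X : {subset gr X <= X}.
Proof.
elim: X => [|x X IH] //= y; case: ifP => _.
  by move=> /IH; rewrite inE orbC => ->.
by rewrite !inE => /orP[->|/IH ->] //; rewrite orbT.
Qed.

Lemma gr_span X : (<<X>> <= <<gr X>>)%VS.
Proof.
elim: X => [|x X IH] /=; first by rewrite span_nil sub0v.
rewrite span_cons; case: ifP => hx.
  by rewrite subv_add -memvE hx.
by rewrite span_cons addvS.
Qed.

Lemma gr_free X : free (gr X).
Proof.
elim: X => [|x X IH] /=; first exact: nil_free.
by case: ifP => hx //; rewrite free_cons hx IH.
Qed.

Lemma gr_size X : size (gr X) = \dim <<X>>.
Proof.
have /eqP <- := gr_free X; apply/eqP; rewrite eqn_leq.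
have h1 : (<<gr X>> <= <<X>>)%VS.
  by apply/span_subvP => y hy; apply: memv_span; exact: (@gr_sub X y hy).
by rewrite (dimvS h1) (dimvS (gr_span X)).
Qed.

Lemma dim_le_sum_img (J : finType) (W : J -> vectType K)
  (f : forall j, 'Hom(vT, W j)) (U : {vspace vT}) :
  (forall u, u \in U -> (forall j, f j u = 0) -> u = 0) ->
  (\dim U <= \sum_j \dim (f j @: U))%N.
Proof.
move=> H.
pose Ks := foldr (fun j V => lker (f j) :&: V)%VS fullv.
suff: forall s, (\dim U <= \dim (U :&: Ks s) + \sum_(j <- s) \dim (f j @: U))%N.
  move/(_ (index_enum J)).
  have -> : \dim (U :&: Ks (index_enum J)) = 0%N.
    apply/eqP; rewrite dimv_eq0 -subv0; apply/subvP => u.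
    rewrite memv_cap => /andP[uU uK]; rewrite memv0; apply/eqP; apply: H => // j.
    have : j \in index_enum J by rewrite mem_index_enum.
    elim: (index_enum J) uK => //= j' s IHs; rewrite memv_cap => /andP[k1 k2].
    rewrite inE => /orP[/eqP->|]; first by apply/eqP; rewrite -memv_ker.
    exact: IHs.
  by [].
elim=> [|j s IH] /=.
  by rewrite capvf big_nil addn0.
rewrite big_cons; apply: (leq_trans IH).
rewrite -(limg_ker_dim (f j) (U :&: Ks s)) addnA leq_add2r.
have -> : (U :&: Ks s :&: lker (f j) = U :&: (lker (f j) :&: Ks s))%VS.
  by rewrite -capvA [(Ks s :&: _)%VS]capvC.
by rewrite leq_add2l dimvS // limgS // capvSl.
Qed.

End LinAlg.
Section Geo.
Variable R : realType.
Local Notation V B := {ffun B -> R^o}.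

Definition islin (B : finType) (L : V B -> R) :=
  forall (c : R) (u w : V B), L (c *: u + w) = c * L u + L w.

Lemma scaleRo (a b : R^o) : a *: b = a * b. Proof. by []. Qed.

Definition delt (B : finType) (t : B) : V B := [ffun s => (s == t)%:R].

Lemma islin0 (B : finType) (L : V B -> R) : islin L -> L 0 = 0.
Proof.
move=> H; have := H 1 0 0; rewrite scaler0 addr0 mul1r => /eqP.
by rewrite -subr_eq0 opprD addrA subrr sub0r oppr_eq0 => /eqP.
Qed.

Lemma lin_expand (B : finType) (L : V B -> R) : islin L ->
  forall u : V B, L u = \sum_t L (delt t) * u t.
Proof.
move=> H u.
have -> : L u = L (\sum_t u t *: delt t).
  congr L; apply/ffunP => s; rewrite sum_ffunE (bigD1 s) //= big1 => [|t ts].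
    by rewrite !ffunE eqxx scaleRo mulr1 addr0.
  by rewrite !ffunE eq_sym (negPf ts) scaleRo mulr0.
have L0 := islin0 H.
elim/big_rec2 : _ => [|t y1 y2 _ <-]; first by rewrite L0.
by rewrite H mulrC.
Qed.

Lemma lin_expandf (B : finType) (L : V B -> R) : islin L ->
  forall x : B -> R, L (finfun x) = \sum_t L (delt t) * x t.
Proof.
move=> H x; rewrite (lin_expand H); apply: eq_bigr => t _; by rewrite ffunE.
Qed.

Lemma linB (B : finType) (L : V B -> R) : islin L -> forall u w, L (u - w) = L u - L w.
Proof.
move=> H u w; have := H (-1) w u; rewrite scaleN1r addrC => ->.
by rewrite mulN1r addrC.
Qed.

Lemma poly_forms (B J : finType) (L : J -> V B -> R) (c : J -> R) (w0 : V B) :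
  (forall j, islin (L j)) ->
  polyhedron [set x : B -> R | forall j, L j (finfun x - w0) <= c j].
Proof.
move=> HL.
exists #|J|, (fun i t => L (enum_val i) (delt t)),
  (fun i => c (enum_val i) + L (enum_val i) w0).
apply/seteqP; split => x /= Hx.
  by move=> i; have := Hx (enum_val i); rewrite linB // lerBlDr lin_expandf.
move=> j; have := Hx (enum_rank j); rewrite enum_rankK.
by rewrite linB // lerBlDr lin_expandf.
Qed.

Lemma poly_convex (B I : finType) (P : set (B -> R)) (x : I -> B -> R) (mu : I -> R) :
  polyhedron P -> (forall i, 0 <= mu i) -> \sum_i mu i = 1 -> (forall i, P (x i)) ->
  P (fun b => \sum_i mu i * x i b).
Proof.
move=> [r [A [b ->]]] mu0 mu1 Px /= k.
have -> : \sum_t A k t * (\sum_i mu i * x i t) = \sum_i mu i * (\sum_t A k t * x i t).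
  under eq_bigr do rewrite mulr_sumr.
  rewrite exchange_big /=; apply: eq_bigr => i _; rewrite mulr_sumr.
  by apply: eq_bigr => t _; rewrite mulrCA.
apply: (@le_trans _ _ (\sum_i mu i * b k)).
  by apply: ler_sum => i _; apply: ler_wpM2l => //; apply: Px.
by rewrite -mulr_suml mu1 mul1r.
Qed.

Definition diffs (B : finType) k (p : 'I_k.+1 -> B -> R) : k.-tuple (V B) :=
  [tuple [ffun b => p (lift ord0 i) b - p ord0 b] | i < k].

Lemma sum_unlift (Z : nmodType) k (F : option 'I_k -> Z) :
  \sum_(j < k.+1) F (unlift ord0 j) = F None + \sum_(i < k) F (Some i).
Proof. by rewrite big_ord_recl unlift_none; congr (_ + _); apply: eq_bigr => i _; rewrite liftK. Qed.

Lemma diffsE (B : finType) k (p : 'I_k.+1 -> B -> R) (i : 'I_k) :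
  (diffs p)`_i = [ffun b => p (lift ord0 i) b - p ord0 b].
Proof. by rewrite -tnth_nth tnth_mktuple. Qed.

Lemma aff_free (B : finType) k (p : 'I_k.+1 -> B -> R) : aff_indep p -> free (diffs p).
Proof.
move=> H; apply/freeP => kk Hk i.
pose F := fun o : option 'I_k => if o is Some i then kk i else - \sum_i kk i.
pose G := fun o : option 'I_k => if o is Some i then p (lift ord0 i) else p ord0.
have pG : forall j, p j = G (unlift ord0 j).
  by move=> j; case: (unliftP ord0 j) => [i' ->|->]; rewrite /G ?liftK ?unlift_none.
have := H (fun j => F (unlift ord0 j)); rewrite sum_unlift /F /= addNr => /(_ erefl).
move=> /(_ _ (lift ord0 i)); rewrite liftK; apply => tt.
under eq_bigr do rewrite pG.
rewrite (sum_unlift (fun o => F o * G o tt)) /F /G /=.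
have := congr1 (fun f : V B => f tt) Hk; rewrite sum_ffunE ffunE => Hk2.
rewrite -[RHS]Hk2; under [RHS]eq_bigr do rewrite ffunE diffsE ffunE scaleRo.
rewrite mulNr mulr_suml addrC.
under [RHS]eq_bigr do rewrite mulrBr.
by rewrite sumrB.
Qed.

Definition pts (B : finType) (w0 : B -> R) (Y : seq (V B)) (j : 'I_(size Y).+1) :=
  fun b => if unlift ord0 j is Some i then w0 b + Y`_i b else w0 b.
Arguments pts [B] w0 Y j.

Lemma pts_lift (B : finType) (w0 : B -> R) (Y : seq (V B)) i :
  pts w0 Y (lift ord0 i) = fun b => w0 b + Y`_i b.
Proof. by rewrite /pts liftK. Qed.

Lemma pts0 (B : finType) (w0 : B -> R) (Y : seq (V B)) : pts w0 Y ord0 = w0.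
Proof. by rewrite /pts unlift_none. Qed.

Lemma free_aff (B : finType) (w0 : B -> R) (Y : seq (V B)) : free Y -> aff_indep (pts w0 Y).
Proof.
move=> fY; have /freeP HY := (fY : free (in_tuple Y)); move=> c c0 cs.
have ci : forall i : 'I_(size Y), c (lift ord0 i) = 0.
  apply: (HY (fun i => c (lift ord0 i))); apply/ffunP => b.
  have := cs b; rewrite big_ord_recl pts0.
  under eq_bigr do rewrite pts_lift.
  move: c0; rewrite big_ord_recl => /eqP; rewrite addr_eq0 => /eqP ->.
  rewrite mulNr mulr_suml -sumrN -big_split /=.
  under eq_bigr do rewrite mulrDr addKr.
  move=> h; rewrite sum_ffunE ffunE -[RHS]h.
  by apply: eq_bigr => i _; rewrite ffunE scaleRo.
move=> j; case: (unliftP ord0 j) => [i ->|->]; first exact: ci.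
move: c0; rewrite big_ord_recl big1 ?addr0 // => i _; exact: ci.
Qed.

End Geo.
Arguments pts [R B] w0 Y j.
Section SimplexA.
Variable R : realType.
Local Notation V B := {ffun B -> R^o}.

Lemma simplexA (B : finType) (S : set (B -> R)) (w0 : B -> R) (Y : seq (V B)) :
  free Y ->
  (forall lam : 'I_(size Y) -> R, (forall i, 0 <= lam i) -> \sum_i lam i <= 1 ->
     S (fun b => w0 b + \sum_i lam i * Y`_i b)) ->
  (size Y <= dimS S)%N.
Proof.
move=> fY HS.
pose X := in_tuple Y.
pose M := fun u : V B => u - \sum_i coord X i u *: Y`_i.
have Mlin : forall (a : R) u w, M (a *: u + w) = a *: M u + M w.
  move=> a u w; rewrite /M.
  under eq_bigr do rewrite linearP scalerDl -scalerA.
  by rewrite big_split /= -scaler_sumr scalerBr opprD addrACA.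
have M0 : forall v, v \in <<Y>>%VS -> M v = 0.
  by move=> v hv; rewrite /M {1}(@coord_span _ _ _ X v hv) subrr.
pose J := ((B + B) + ('I_(size Y) + unit))%type.
pose L : J -> V B -> R := fun j u => match j with
  | inl (inl b) => M u b
  | inl (inr b) => - M u b
  | inr (inl i) => - coord X i u
  | inr (inr _) => \sum_i coord X i u end.
pose c : J -> R := fun j => match j with inr (inr _) => 1 | _ => 0 end.
have Llin : forall j, islin (L j).
  case=> [[b|b]|[i|[]]] a u w /=.
  - by rewrite Mlin !ffunE scaleRo.
  - by rewrite Mlin !ffunE scaleRo opprD mulrN.
  - by rewrite linearP ?scaleRo opprD mulrN.
  - under eq_bigr do rewrite linearP ?scaleRo.
    by rewrite big_split /= mulr_sumr.
pose P := [set x : B -> R | forall j, L j (finfun x - finfun w0) <= c j].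
have Ppoly : polyhedron P by apply: poly_forms.
have PS : P `<=` S.
  move=> x Px; set z := finfun x - finfun w0.
  have Mz : M z = 0.
    apply/ffunP => b; have -> : (0 : V B) b = 0 by rewrite ffunE.
    apply/eqP; rewrite eq_le.
    have h1 := Px (inl (inl b)); have h2 := Px (inl (inr b)).
    by rewrite /= in h1 h2; rewrite h1 -oppr_le0 h2.
  have zE : z = \sum_i coord X i z *: Y`_i.
    by apply/eqP; rewrite -subr_eq0; apply/eqP.
  have HS' := HS (fun i => coord X i z).
  have H1 : forall i, 0 <= coord X i z.
    by move=> i; rewrite -oppr_le0; exact: (Px (inr (inl i))).
  have := HS' H1 (Px (inr (inr tt))).
  suff -> : x = (fun b => w0 b + \sum_i coord X i z * Y`_i b) by [].
  apply: funext => b; have := congr1 (fun f : V B => f b) zE.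
  rewrite sum_ffunE !ffunE.
  under eq_bigr do rewrite ffunE scaleRo.
  by move=> <-; rewrite addrC subrK.
have Ppts : forall j, P (pts w0 Y j).
  move=> j jj.
  have zE : finfun (pts w0 Y j) - finfun w0 = if unlift ord0 j is Some i then Y`_i else 0.
    apply/ffunP => b; rewrite !ffunE /pts.
    by case: unlift => [i|]; rewrite ?ffunE ?subrr // addrC addKr.
  rewrite zE; case: (unlift ord0 j) => [i|].
    have Yi : Y`_i \in <<Y>>%VS by apply: memv_span; apply: mem_nth.
    have cf : forall k, coord X k Y`_i = (i == k)%:R.
      by move=> k; apply: (@coord_free _ _ _ X i k fY).
    case: jj => [[b|b]|[k|[]]] /=.
    - by rewrite M0 // ffunE.
    - by rewrite M0 // ffunE oppr0.
    - by rewrite cf oppr_le0 ler0n.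
    - rewrite (bigD1 i) //= big1 => [|k ki]; first by rewrite cf eqxx addr0.
      by rewrite cf eq_sym (negPf ki).
  have c0 : forall k, coord X k 0 = 0 by move=> k; rewrite linear0.
  case: jj => [[b|b]|[k|[]]] /=.
  - by rewrite M0 ?mem0v // ffunE.
  - by rewrite M0 ?mem0v // ffunE oppr0.
  - by rewrite c0 oppr0.
  - by rewrite big1 ?ler01.
have hd : (size Y < #|B|.+1)%N.
  rewrite ltnS; have := dimvS (subvf <<Y>>%VS); rewrite dimvf /dim /= muln1.
  by rewrite (eqP fY).
rewrite /dimS; apply: (@leq_bigmax_cond _ _ (fun k : 'I__ => (k : nat)) (Ordinal hd)).
apply/asboolP; exists P; split => //; split => //.
exists (pts w0 Y); split => //; exact: free_aff.
Qed.

End SimplexA.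
Section Rho.
Variables (R : realType) (A B : finType) (g : B -> A).
Definition rho (x : {ffun A -> R^o}) : {ffun B -> R^o} := [ffun y => x (g y)].
Fact rho_lin : linear rho.
Proof. by move=> c x y; apply/ffunP => b; rewrite !ffunE. Qed.
HB.instance Definition _ := GRing.isSemilinear.Build R _ _ _ rho (GRing.semilinear_linear rho_lin).
Lemma rhoE x : linfun rho x = rho x. Proof. by rewrite lfunE. Qed.
End Rho.

Section Grid.
Variables (R : realType) (n m : nat) (a : 'I_m -> R) (t : 'I_m -> 'I_n -> int).
Local Notation V B := {ffun B -> R^o}.

Lemma at_ptE N (u : grid n N -> R) (w : 'I_n -> int) (x : grid n N) :
  (forall i, (x i : nat)%:Z = w i) -> at_pt u w = u x.
Proof.
move=> hx; rewrite /at_pt; case: pickP => [y /forallP hy|/(_ x)].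
  congr u; apply/ffunP => i; apply: val_inj; have := hy i; rewrite -hx.
  by move/eqP => [].
by have -> : [forall i, (x i : nat)%:Z == w i] by apply/forallP => i; rewrite hx.
Qed.

Lemma sub_lt N q (v : 'I_n -> nat) (Hv : forall i, (v i + q <= N)%N) (y : grid n q) i :
  (v i + y i < N)%N.
Proof. by apply: leq_trans (Hv i); rewrite ltn_add2l. Qed.

Definition sub_of N q (v : 'I_n -> nat) (Hv : forall i, (v i + q <= N)%N) (y : grid n q) :
  grid n N := [ffun i => Ordinal (sub_lt Hv y i)].

Lemma U_restrict N q (v : 'I_n -> nat) (Hv : forall i, (v i + q <= N)%N) (u : grid n N -> R) :
  U_set a t u -> U_set a t (fun y => u (sub_of Hv y)).
Proof.
move=> Hu s adm.
have adm' : admissible_shift N t (fun i => s i + (v i)%:Z).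
  move=> j i; have [h1 h2] := adm j i; have h3 := Hv i; split; lia.
have key : forall j, at_pt (fun y => u (sub_of Hv y)) (fun i => t j i + s i) =
                     at_pt u (fun i => t j i + (s i + (v i)%:Z)).
  move=> j.
  have hy : forall i, (absz (t j i + s i)%R < q)%N.
    by move=> i; have [h1 h2] := adm j i; lia.
  pose y : grid n q := [ffun i => Ordinal (hy i)].
  rewrite (@at_ptE _ _ _ y) ?(@at_ptE _ _ _ (sub_of Hv y)) // => i; rewrite !ffunE /=; rewrite /y ?ffunE /=.
    by have [h1 h2] := adm j i; lia.
  by have [h1 h2] := adm j i; lia.
have := Hu _ adm'; rewrite /satisfies_lin /= => -[j1 [j2 [ne [e mn]]]].
exists j1, j2; rewrite !key; split => //; split => // j; rewrite key; exact: mn.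
Qed.

End Grid.
Section Subadd.
Variables (R : realType) (n m : nat) (a : 'I_m -> R) (t : 'I_m -> 'I_n -> int).
Local Notation V B := {ffun B -> R^o}.

Lemma subadd N (J : finType) (q : J -> nat) (v : J -> 'I_n -> nat)
  (Hv : forall r i, (v r i + q r <= N)%N)
  (Hcov : forall x : grid n N, exists r, exists y : grid n (q r), sub_of (Hv r) y = x) :
  (dimU a t N <= \sum_r dimU a t (q r))%N.
Proof.
rewrite {1}/dimU /dimS; apply/bigmax_leqP => k /asboolP [P [Ppoly [PU [p [Pp aff]]]]].
have fX := aff_free aff.
pose f := fun r => linfun (@rho R _ _ (sub_of (Hv r))).
have H1 : (k <= \sum_r \dim (f r @: <<diffs p>>))%N.
  have Hd : \dim <<diffs p>> = k by rewrite (eqP fX) size_tuple.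
  have := @dim_le_sum_img _ _ J _ f <<diffs p>>%VS; rewrite Hd; apply.
  move=> u _ hu; apply/ffunP => x; have [r [y <-]] := Hcov x.
  by have := congr1 (fun g : V (grid n (q r)) => g y) (hu r); rewrite /f rhoE !ffunE.
apply: (leq_trans H1); apply: leq_sum => r _.
rewrite limg_span -gr_size.
apply: (simplexA (w0 := fun y => p ord0 (sub_of (Hv r) y))); first exact: gr_free.
move=> lam lam0 lam1.
set Y := gr _.
have hY : forall i : 'I_(size Y), exists l : 'I_k, Y`_i = f r (diffs p)`_l.
  move=> i; have : Y`_i \in Y by apply: mem_nth.
  move=> /gr_sub /mapP [x xin ->].
  have hl : (index x (diffs p) < k)%N by have := index_mem x (diffs p); rewrite xin size_tuple.
  by exists (Ordinal hl); rewrite /= nth_index.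
have [sig hsig] := choice hY.
pose F := fun o : option 'I_(size Y) => if o is Some i then lam i else 1 - \sum_i lam i.
pose G := fun o : option 'I_(size Y) => if o is Some i then p (lift ord0 (sig i)) else p ord0.
have Pc := @poly_convex R _ 'I_(size Y).+1 P (fun j => G (unlift ord0 j))
   (fun j => F (unlift ord0 j)) Ppoly.
have := U_restrict (Hv r) (PU _ (Pc _ _ _)).
have -> : (fun y => \sum_(j < (size Y).+1) F (unlift ord0 j) * G (unlift ord0 j) (sub_of (Hv r) y))
   = (fun b => p ord0 (sub_of (Hv r) b) + \sum_i lam i * Y`_i b).
  apply: funext => y.
  rewrite (sum_unlift (fun o => F o * G o (sub_of (Hv r) y))) /F /G.
  under [in RHS]eq_bigr do rewrite hsig /f rhoE ffunE diffsE ffunE.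
  rewrite mulrBl mul1r mulr_suml.
  under [X in _ = _ + X]eq_bigr do rewrite mulrBr.
  by rewrite sumrB addrA addrAC.
apply.
- by move=> j; case: (unlift ord0 j) => [i|] /=; rewrite ?subr_ge0.
- by rewrite (sum_unlift F) /F subrK.
- by move=> j; case: (unlift ord0 j) => [i|] /=.
Qed.

End Subadd.
Lemma pow_mono x y n : (y <= x)%N -> (y ^ n <= x ^ n)%N.
Proof. by move=> yx; elim: n => // n ih; rewrite !expnS leq_mul. Qed.

Lemma pow_diff x y n : (y <= x)%N -> (x * (x^n - y^n) <= n * (x - y) * x^n)%N.
Proof.
move=> yx; elim: n => [|n IH]; first by rewrite !expn0 subnn muln0.
have hn : (y ^ n <= x ^ n)%N by apply: pow_mono.
have hxn : (x ^ n * y <= x ^ n * x)%N by rewrite leq_mul2l yx orbT.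
rewrite !expnS.
set A := (x ^ n)%N in IH hn hxn *; set Bv := (y ^ n)%N in IH hn *.
have e1 : (x * A - y * Bv = x * (A - Bv) + (x - y) * Bv)%N.
  rewrite mulnBr mulnBl; have h1 : (x * Bv <= x * A)%N by rewrite leq_mul2l hn orbT.
  have h2 : (y * Bv <= x * Bv)%N by rewrite leq_mul2r yx orbT.
  lia.
rewrite e1 mulnDr.
have h3 : (x * ((x - y) * Bv) <= (x - y) * (x * A))%N.
  by rewrite mulnCA leq_mul2l leq_mul2l hn !orbT.
have h4 : (x * (x * (A - Bv)) <= x * (n * (x - y) * A))%N by rewrite leq_mul2l IH orbT.
apply: leq_trans (leq_add h4 h3) _.
by rewrite mulSn mulnDl; nia.
Qed.

Section Bound.
Variables (R : realType) (n m : nat) (a : 'I_m -> R) (t : 'I_m -> 'I_n -> int).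

Lemma card_grid N : #|grid n N| = (N ^ n)%N.
Proof. by rewrite card_ffun !card_ord. Qed.

Lemma dimU_le N : (dimU a t N <= N ^ n)%N.
Proof.
rewrite /dimU /dimS; apply/bigmax_leqP => k _; rewrite -card_grid -ltnS; exact: ltn_ord.
Qed.

Lemma bound M N : (0 < M)%N ->
  (dimU a t N <= (N %/ M) ^ n * dimU a t M + (N ^ n - (N %/ M * M) ^ n))%N.
Proof.
move=> M0; set k := (N %/ M)%N.
have kM : (k * M <= N)%N := leq_divM N M.
pose inside := fun x : grid n N => [forall i, (x i < k * M)%N].
pose J := (grid n k + {x : grid n N | ~~ inside x})%type.
pose q : J -> nat := fun j => match j with inl _ => M | inr _ => 1%N end.
pose v : J -> 'I_n -> nat := fun j i =>
  match j with inl c => (c i * M)%N | inr x => ((val x) i : nat) end.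
have Hv : forall r i, (v r i + q r <= N)%N.
  case => [c|x] i /=.
    by have := ltn_ord (c i); nia.
  by rewrite addn1; exact: ltn_ord.
have Hcov : forall x : grid n N, exists r, exists y : grid n (q r), sub_of (Hv r) y = x.
  move=> x; case hin : (inside x).
    have hc : forall i, (x i %/ M < k)%N.
      by move=> i; rewrite ltn_divLR //; move/forallP: hin => /(_ i).
    have hy : forall i, (x i %% M < M)%N by move=> i; rewrite ltn_mod.
    exists (inl [ffun i => Ordinal (hc i)]), ([ffun i => Ordinal (hy i)] : grid n M).
    apply/ffunP => i; apply: val_inj; rewrite ffunE /=.
    by rewrite !ffunE /= -divn_eq.
  exists (inr (exist _ x (negbT hin))), ([ffun i => ord0] : grid n 1).
  by apply/ffunP => i; apply: val_inj; rewrite ffunE /= ffunE /= addn0.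
have := @subadd R n m a t N J q v Hv Hcov.
rewrite big_sumType /= => H.
apply: (leq_trans H); apply: leq_add.
  by rewrite sum_nat_const card_grid.
have hin : ((k * M) ^ n <= #|[pred x | inside x]|)%N.
  have hw : (k * M <= N)%N := kM.
  have hg : forall y : grid n (k * M), inside [ffun i => widen_ord hw (y i)].
    by move=> y; apply/forallP => i; rewrite ffunE /=.
  pose g := fun y => exist (fun x => inside x) _ (hg y).
  have ginj : injective g.
    move=> y1 y2 /(congr1 val) /= /ffunP e; apply/ffunP => i; apply: val_inj.
    by have := e i; rewrite !ffunE => /(congr1 val).
  by rewrite -card_grid; apply: leq_trans (leq_card g ginj) _; rewrite card_sig.
have hcard : #|{: {x : grid n N | ~~ inside x}}| = (N ^ n - #|[pred x | inside x]|)%N.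
  rewrite card_sig -(card_grid N) -(cardC [pred x | inside x]) addKn.
  by apply: eq_card => x; rewrite !inE.
apply: (@leq_trans (\sum_(i : {x : grid n N | ~~ inside x}) 1)%N).
  apply: leq_sum => i _; have := dimU_le 1; by rewrite exp1n.
rewrite sum_nat_const hcard muln1; lia.
Qed.

End Bound.
Lemma frac_le (R : realType) (x y z A B C : nat) : (0 < A)%N -> (0 < B)%N -> (0 < C)%N ->
  (x * B * C <= y * A * C + z * A * B)%N ->
  (x%:R / A%:R <= y%:R / B%:R + z%:R / C%:R :> R).
Proof.
move=> A0 B0 C0 h.
rewrite addf_div ?pnatr_eq0 -?lt0n // ler_pdivrMr ?ltr0n // mulrAC.
rewrite ler_pdivlMr ?mulr_gt0 ?ltr0n // -!natrM -natrD -natrM ler_nat.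
by nia.
Qed.

Section Key.
Variables (R : realType) (n m : nat) (a : 'I_m -> R) (t : 'I_m -> 'I_n -> int).

Lemma key_ineq M N : (0 < M)%N -> (0 < N)%N ->
  ((dimU a t N)%:R / (N ^ n)%:R <= (dimU a t M)%:R / (M ^ n)%:R + (n * M)%:R / N%:R :> R).
Proof.
move=> M0 N0; apply: frac_le; rewrite ?expn_gt0 ?M0 ?N0 //.
set k := (N %/ M)%N.
have hb := bound a t N M0.
have kM : (k * M <= N)%N := leq_divM N M.
have hd := pow_diff n kM.
have hr : (N - k * M <= M)%N.
  by rewrite {1}(divn_eq N M) -/k addKn ltnW // ltn_mod.
have h2 : (N * (N ^ n - (k * M) ^ n) <= n * M * N ^ n)%N.
  apply: leq_trans hd _; rewrite leq_mul2r leq_mul2l hr !orbT //.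
have h3 : (k ^ n * M ^ n <= N ^ n)%N by rewrite -expnMn; apply: pow_mono.
move: hb h2 h3; rewrite -/k.
move: (dimU a t N) (dimU a t M) (k ^ n)%N (M ^ n)%N (N ^ n)%N (N ^ n - (k * M) ^ n)%N.
move=> DN DM K Mn P E hb h2 h3.
have s1 : (DN * Mn * N <= (K * DM + E) * Mn * N)%N by rewrite !leq_mul2r hb !orbT.
apply: leq_trans s1 _.
have s2 : (K * DM * Mn * N <= DM * P * N)%N.
  by rewrite [(K * DM)%N]mulnC -[(DM * K * Mn)%N]mulnA leq_mul2r leq_mul2l h3 !orbT.
have s3 : (E * Mn * N <= n * M * P * Mn)%N.
  by rewrite mulnAC [(E * N)%N]mulnC leq_mul2r h2 orbT.
by rewrite mulnDl mulnDl; apply: leq_add.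
Qed.

End Key.
Theorem mainTheorem1 (R : realType) (n m : nat) (a : 'I_m -> R)
    (t : 'I_m -> 'I_n -> int)
    (hm : (0 < m)%N)
    (hdist : forall j1 j2 : 'I_m, (forall i, t j1 i = t j2 i) -> j1 = j2) :
  (* subadditivity over partitions of T_N into cubical subgrids *)
  (forall (N : nat) (RR : nat) (q : 'I_RR -> nat) (v : 'I_RR -> 'I_n -> nat),
     (0 < N)%N ->
     (forall r, 0 < q r)%N ->
     (forall r i, v r i + q r <= N)%N ->
     (forall x : grid n N, exists! r : 'I_RR,
        forall i, (v r i <= x i < v r i + q r)%N) ->
     (dimU a t N <= \sum_(r < RR) dimU a t (q r))%N)
  /\
  (* the limit H(f) of dim(U_N)/N^n exists and equals the infimum *)
  ((fun N : nat => ((dimU a t N.+1)%:R / ((N.+1) ^ n)%:R : R)) @ \oo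
     --> inf [set ((dimU a t N.+1)%:R / ((N.+1) ^ n)%:R : R) | N in [set: nat]]).
Proof.
split.
  move=> N RR q v N0 q0 Hv Hpart.
  apply: (@subadd _ _ _ a t N _ q v Hv) => x.
  have [r [hr _]] := Hpart x.
  have hy : forall i, (x i - v r i < q r)%N.
    by move=> i; have /andP[h1 h2] := hr i; lia.
  exists r, [ffun i => Ordinal (hy i)].
  apply/ffunP => i; apply: val_inj; rewrite ffunE /= ffunE /=.
  by have /andP[h1 h2] := hr i; lia.
set u := fun N : nat => ((dimU a t N.+1)%:R / ((N.+1) ^ n)%:R : R).
set E := [set u N | N in [set: nat]].
have u0 : forall N, 0 <= u N by move=> N; rewrite /u divr_ge0 ?ler0n.
have hlb : has_lbound E by exists 0 => y [N _ <-].
have hinf : has_inf E by split => //; exists (u 0%N), 0%N.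
have EN : forall N, E (u N) by move=> N; exists N.
apply/cvgrPdist_lt => e e0.
have e2 : 0 < e / 2 by rewrite divr_gt0.
have [y [M0 _ <-] hy] := inf_adherent e2 hinf.
pose Nb := (Num.Def.trunc ((n * M0.+1)%:R / (e / 2) : R)).+1.
have := nbhs_infty_ge Nb; apply: filterS => N hN.
rewrite distrC ger0_norm ?subr_ge0 ?(ge_inf hlb (EN N)) // ltrBlDl.
have hk := key_ineq a t (ltn0Sn M0) (ltn0Sn N).
apply: (le_lt_trans hk); rewrite [e]splitr addrA; apply: ltrD => //.
have h1 : (n * M0.+1)%:R / (e / 2) < N.+1%:R :> R.
  apply: (lt_le_trans (truncnS_gt _)); rewrite ler_nat; exact: (leq_trans hN (leqnSn N)).
by rewrite ltr_pdivrMr ?ltr0n // mulrC -ltr_pdivrMr.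
Qed.
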